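(* Let $\mathcal{C}$ be the code described in the context and let $1\le B'\le B$. Suppose the erasure pattern consists of a single burst, i.e. the erased positions are exactly $s,s+1,\ldots,s+B'-1$ for some $1\le s\le n-B'+1$, and there are no other erasures. Assume that either $r=0$ (i.e. $B$ divides $k$), or $r>0$ and $B'\le N+r$. Then every erased information symbol $u_i$ ($1\le i\le k$) can be decoded with maximum delay $T$, i.e. it can be recovered from $(y_1,\ldots,y_{i+\min\{T,n-i\}})$; in fact each erased $u_i$ can be recovered from the interleaved parity check $p_{N+j}$, where $j\in\{1,\ldots,B\}$ with $j\equiv i\pmod B$.
   Context: Code construction. Fix integers $T\ge 1$, $N\ge 0$, $B\ge 1$ with $N+B\le T$ and $N<T$, and a finite field $\mathbb{F}_q$ with $q\ge T$. Set $k=T-N$ and $n=T+B$. Write $k=mB+r$ with $m=\lfloor k/B\rfloor$ and $0\le r<B$. The code $\mathcal{C}\subseteq\mathbb{F}_q^n$ is the linear systematic code whose codeword for the message $\mathbf{u}=(u_1,\ldots,u_k)$ is $\mathbf{x}=(u_1,\ldots,u_k,p_1,\ldots,p_{N+B})$ (so $u_i$ is at position $i$ and $p_j$ at position $k+j$), where: (i) $p_1,\ldots,p_N$ are linear functions of $\mathbf{u}$ such that the length-$(k+N)$ code $\{(u_1,\ldots,u_k,p_1,\ldots,p_N)\}$ is a systematic MDS (e.g. Cauchy-based Reed–Solomon) $(k+N,k)$ code over $\mathbb{F}_q$; (ii) for $i=1,\ldots,B$, the interleaved parity check is $p_{N+i}=\sum_{\ell=0}^{m-1}u_{i+\ell B}+\mathbb{1}_{\{i\le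 r\}}\,u_{mB+i}$, i.e. $p_{N+i}$ is the sum of all $u_j$, $1\le j\le k$, with $j\equiv i \pmod B$. Decoding with delay. Given an erasure pattern $\boldsymbol{\varepsilon}\in\{0,1\}^n$ ($\varepsilon_j=1$ meaning $x_j$ is erased), the received word is $\mathbf{y}=(y_1,\ldots,y_n)$ with $y_j=x_j$ if $\varepsilon_j=0$ and $y_j=\star$ otherwise. A symbol $x_i$ can be recovered from $(y_1,\ldots,y_j)$ if for every two codewords $\mathbf{x},\mathbf{x}'\in\mathcal{C}$ that agree on all positions $\ell\le j$ with $\varepsilon_\ell=0$, one has $x_i=x'_i$; it is decoded with maximum delay $T$ if it can be recovered from $(y_1,\ldots,y_{i+\min\{T,n-i\}})$. *)

(* Defs.v *)
From HB Require Import structures.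
From mathcomp Require Import all_boot all_order all_algebra.
Set Implicit Arguments. Unset Strict Implicit. Unset Printing Implicit Defensive.
Import GRing.Theory.
Local Open Scope ring_scope.

(* Positions and message indices are 1-based natural numbers.
   A message is u : nat -> F, of which only u 1, ..., u k are used.
   The MDS parities p_1..p_N are given as linear functions of u by their
   coefficients G : p_j = \sum_{l=1}^k G j l * u l. *)

(* Codeword x = enc u, as a function of the (1-based) position;
   positions outside 1..n are set to 0 and never consulted. *)
Definition enc (F : fieldType) (T N B : nat) (G : nat -> nat -> F)
  (u : nat -> F) (pos : nat) : F :=
  let k := (T - N)%N in
  if (1 <= pos <= k)%N then u pos
  else if (pos <= k + N)%N then \sum_(1 <= l < k.+1) G (pos - k)%N l * u l
  else if (pos <= k + N + B)%N then
    \sum_(1 <= l < k.+1 | l == (pos - k - N)%N %[mod B]) u l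
  else 0.

(* The length-(k+N) systematic code {(u_1..u_k,p_1..p_N)} is MDS:
   every nonzero codeword has Hamming weight at least (k+N) - k + 1 = N+1. *)
Definition systematic_MDS (F : fieldType) (T N B : nat) (G : nat -> nat -> F) : Prop :=
  forall u : nat -> F,
    (exists2 j, (1 <= j <= (T - N) + N)%N & enc T N B G u j != 0) ->
    (N.+1 <= \sum_(1 <= j < ((T - N) + N).+1) (enc T N B G u j != 0%R : nat))%N.

Definition recoverable_from (F : fieldType) (T N B : nat) (G : nat -> nat -> F)
  (S : pred nat) (i : nat) : Prop :=
  forall u u' : nat -> F,
    (forall l, S l -> enc T N B G u l = enc T N B G u' l) ->
    enc T N B G u i = enc T N B G u' i.

Definition prefix_unerased (eps : nat -> bool) (j : nat) : pred nat :=
  fun l => (1 <= l <= j)%N && ~~ eps l.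

Definition recoverable_prefix (F : fieldType) (T N B : nat) (G : nat -> nat -> F)
  (eps : nat -> bool) (i j : nat) : Prop :=
  recoverable_from T N B G (prefix_unerased eps j) i.

(* Decoded with maximum delay T (n = T + B). *)
Definition decodable_delay (F : fieldType) (T N B : nat) (G : nat -> nat -> F)
  (eps : nat -> bool) (i : nat) : Prop :=
  recoverable_prefix T N B G eps i (i + minn T ((T + B) - i)).

(* The positions involved in the interleaved parity check p_{N+j},
   j in 1..B, j = i mod B: the position k+N+j of p_{N+j} together with
   the other information positions l /= i, l = i mod B. *)
Definition parity_support (T N B i : nat) : pred nat :=
  let k := (T - N)%N in
  let j := ((i - 1) %% B).+1 in
  fun l => (l == k + N + j)%N ||
           [&& (1 <= l <= k)%N, l == i %[mod B] & l != i].

(* Main.v *)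
Require Import Defs.
From HB Require Import structures.
From mathcomp Require Import all_boot all_order all_algebra.
From mathcomp Require Import zify.
Import GRing.Theory.
Local Open Scope ring_scope.

Lemma recov (F : fieldType) (T N B : nat) (G : nat -> nat -> F) (i : nat) :
  (1 <= B)%N -> (1 <= i <= T - N)%N ->
  recoverable_from T N B G (parity_support T N B i) i.
Proof.
move=> HB Hi u u' H.
set k := (T - N)%N.
set j := ((i - 1) %% B).+1.
have Hjmod : (j = i %[mod B])%N.
  rewrite /j -addn1 modnDml; have -> : (i - 1 + 1 = i)%N by lia. by [] .
have Hj1 : (1 <= j <= B)%N by rewrite /j ltn_mod HB.
have Hpos : parity_support T N B i (k + N + j)%N by rewrite /parity_support eqxx.
have E := H _ Hpos.
have Hother : forall l, (1 <= l <= k)%N -> (l == i %[mod B]) -> l != i ->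
   u l = u' l.
  move=> l Hl Hm Hn.
  have := H l; rewrite /parity_support Hl Hm Hn orbT /enc -/k Hl => ->//.
move: E; rewrite /enc -/k Hi.
have -> : (1 <= k + N + j <= k)%N = false by lia.
have -> : (k + N + j <= k + N)%N = false by lia.
have -> : (k + N + j <= k + N + B)%N by lia.
have -> : (k + N + j - k - N = j)%N by lia.
rewrite big_mkcond [X in _ = X]big_mkcond /=.
have Hin : i \in index_iota 1 k.+1 by rewrite mem_index_iota; lia.
rewrite (bigD1_seq i Hin (iota_uniq _ _)) [X in _ = X](bigD1_seq i Hin (iota_uniq _ _)) /=.
have -> : (i == j %[mod B])%N by rewrite Hjmod.
move=> E.
have Hrest : \big[+%R/0]_(l <- index_iota 1 k.+1 | l != i)
     (if (l == j %[mod B])%N then u l else 0) =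
   \big[+%R/0]_(l <- index_iota 1 k.+1 | l != i)
     (if (l == j %[mod B])%N then u' l else 0).
  rewrite big_seq_cond [RHS]big_seq_cond; apply: eq_bigr => l /andP[Hl Hn].
  case: ifP => // Hm; apply: Hother => //.
    by move: Hl; rewrite mem_index_iota; lia.
  by rewrite -Hjmod.
by move: E; rewrite Hrest => /addIr.
Qed.
Theorem mainTheorem3 (F : finFieldType) (T N B : nat) (G : nat -> nat -> F)
    (B' s : nat) :
  (1 <= T)%N -> (1 <= B)%N -> (N + B <= T)%N -> (N < T)%N ->
  (T <= #|F|)%N ->
  systematic_MDS T N B G ->
  (1 <= B' <= B)%N ->
  (1 <= s)%N -> (s <= (T + B) - B' + 1)%N ->
  ((T - N) %% B = 0)%N \/ (0 < (T - N) %% B /\ B' <= N + (T - N) %% B)%N ->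
  let eps := fun l : nat => (s <= l <= s + B' - 1)%N in
  forall i : nat, (1 <= i <= T - N)%N -> eps i ->
    decodable_delay T N B G eps i /\
    (forall l, parity_support T N B i l ->
       (1 <= l <= i + minn T ((T + B) - i))%N && ~~ eps l) /\
    recoverable_from T N B G (parity_support T N B i) i.
Proof.
move=> HT HB HNB HNT _ _ /andP[HB1 HB2] Hs1 Hs2 Hr eps i Hi Hei.
have Hsup : forall l, parity_support T N B i l ->
       (1 <= l <= i + minn T ((T + B) - i))%N && ~~ eps l.
  move=> l; rewrite /parity_support => /orP [/eqP -> | /and3P [Hl Hm Hn]].
    have Hdi := divn_eq (i - 1) B.
    have Hdk := divn_eq (T - N) B.
    have Hjj : ((i - 1) %% B < B)%N by rewrite ltn_mod.
    have Hrr : ((T - N) %% B < B)%N by rewrite ltn_mod.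
    have Hjle : ((i - 1) %% B <= i - 1)%N by apply: leq_mod.
    move: Hei; rewrite /eps => Hei.
    apply/andP; split; first lia.
    apply/negP => Hb.
    have : ((i - 1) %/ B * B + B <= (T - N) %/ B * B)%N \/
           ((T - N) %/ B * B + B <= (i - 1) %/ B * B)%N \/
           ((i - 1) %/ B * B = (T - N) %/ B * B)%N.
      case: (ltngtP ((i - 1) %/ B)%N ((T - N) %/ B)%N) => Hq.
      - by left; rewrite addnC -mulSn leq_mul2r Hq orbT.
      - by right; left; rewrite addnC -mulSn leq_mul2r Hq orbT.
      - by right; right; rewrite Hq.
    move: Hdi Hdk Hb Hei Hr.
    move: ((i - 1) %/ B * B)%N ((T - N) %/ B * B)%N => X Y.
    move: ((i - 1) %% B)%N ((T - N) %% B)%N Hjj Hrr Hjle => a b *. lia.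
  have Hdl := divn_eq l B.
  have Hdi := divn_eq i B.
  move/eqP: Hm => Hm.
  have Hne : (l %/ B != i %/ B)%N.
    apply/eqP => Heq; move/eqP: Hn; apply; by rewrite Hdl Hdi Heq Hm.
  move: Hei; rewrite /eps => Hei.
  apply/andP; split; first lia.
  apply/negP => Hb.
  case: (ltngtP (l %/ B)%N (i %/ B)%N) Hne => // Hq _.
    have : (l %/ B * B + B <= i %/ B * B)%N by rewrite addnC -mulSn leq_mul2r Hq orbT.
    move: Hdl Hdi Hb Hei Hm.
    move: (l %/ B * B)%N (i %/ B * B)%N => X Y. lia.
  have : (i %/ B * B + B <= l %/ B * B)%N by rewrite addnC -mulSn leq_mul2r Hq orbT.
  move: Hdl Hdi Hb Hei Hm.
  move: (l %/ B * B)%N (i %/ B * B)%N => X Y. lia.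
split; last split; [| exact: Hsup | exact: (@recov _ T N B G i HB Hi)].
rewrite /decodable_delay /recoverable_prefix /recoverable_from. move=> u u' H; apply: (@recov _ T N B G i HB Hi u u') => l Hl; apply: H.
exact: Hsup.
Qed.
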